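(* Let $\gamma\in\{0\}\cup(0,\infty)\cup\{\infty\}$. The dual problem $$\sup_{q\in S^n_\infty,\ \rho^1,\rho^2\in[0,\gamma]^n}\ \sum_{x\in V}\min_{i\in I}\Big(C_i(x)+(\mathrm{div}_wq_i)(x)+\rho_i^2-\rho_i^1\Big)+\sum_{i=1}^n(\rho_i^1S_i^\ell-\rho_i^2S_i^u)$$ is equivalent to (has the same optimal value as) the max-flow problem $$\sup_{p_s,p,q,\rho^1,\rho^2}\ \sum_{x\in V}p_s(x)+\sum_{i=1}^n(\rho_i^1S_i^\ell-\rho_i^2S_i^u)$$ over $p_s:V\to\mathbb{R}$, $p_i:V\to\mathbb{R}$, $q_i:V\times V\to\mathbb{R}$, $\rho_i^1,\rho_i^2\in\mathbb{R}$, subject to, for all $i\in I$: $|q_i(x,y)|\le1$ for all $(x,y)$ with $\{x,y\}\in E$; $p_i(x)\le C_i(x)$ for all $x\in V$; $(\mathrm{div}_wq_i)(x)-p_s(x)+p_i(x)=\rho_i^1-\rho_i^2$ for all $x\in V$; and $0\le\rho_i^1,\rho_i^2\le\gamma$.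
   Context: Let $G=(V,E)$ be a finite undirected graph with symmetric weights $w(x,y)=w(y,x)>0$ for $\{x,y\}\in E$ and $w(x,y)=0$ otherwise. For $\phi:V\times V\to\mathbb{R}$, $(\mathrm{div}_w\phi)(x)=\frac12\sum_{y\in V}w(x,y)(\phi(x,y)-\phi(y,x))$ (so only values on ordered pairs $(x,y)$ with $\{x,y\}\in E$ matter), $\|\phi\|_\infty=\max_{x,y}|\phi(x,y)|$, and $S^n_\infty=\{(q_1,\dots,q_n):q_i:V\times V\to\mathbb{R},\ \|q_i\|_\infty\le1\}$. Let $n\ge2$, $I=\{1,\dots,n\}$, $C_i:V\to\mathbb{R}$ given. Size bounds are integers $0\le S_i^\ell\le S_i^u$ with $\sum_iS_i^\ell\le|V|\le\sum_iS_i^u$. For $\gamma=\infty$, the interval $[0,\gamma]$ means $[0,\infty)$. *)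

(* Defs.v *)
From HB Require Import structures.
From mathcomp Require Import all_boot all_order all_algebra.
From mathcomp Require Import all_classical all_reals.
From mathcomp Require Import ereal.
Set Implicit Arguments. Unset Strict Implicit. Unset Printing Implicit Defensive.
Import Order.TTheory GRing.Theory Num.Theory.
Local Open Scope ring_scope.

Definition divw {R : realType} {V : finType} (w : V -> V -> R)
  (phi : V -> V -> R) (x : V) : R :=
  2^-1 * \sum_(y : V) w x y * (phi x y - phi y x).

Definition weighted_graph {R : realType} {V : finType} (E : rel V)
  (w : V -> V -> R) : Prop :=
  (forall x y, E x y = E y x) /\
  (forall x y, w x y = w y x) /\
  (forall x y, E x y -> 0 < w x y) /\
  (forall x y, ~~ E x y -> w x y = 0).

Definition in_Sinf {R : realType} {V : finType} (n : nat)
  (q : 'I_n -> V -> V -> R) : Prop :=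
  forall i x y, `|q i x y| <= 1.

(* rho in [0, gamma] (gamma = +oo means [0, oo)) *)
Definition in_box {R : realType} (gamma : \bar R) (r : R) : Prop :=
  0 <= r /\ (r%:E <= gamma)%E.

(* objective of the dual problem (in \bar R; the min over I of n >= 1
   real numbers is finite) *)
Definition dual_obj {R : realType} {V : finType} (n : nat) (w : V -> V -> R)
  (C : 'I_n -> V -> R) (Sl Su : 'I_n -> nat)
  (q : 'I_n -> V -> V -> R) (r1 r2 : 'I_n -> R) : \bar R :=
  ((\sum_(x : V) \big[Order.min/+oo%E]_(i < n)
      (C i x + divw w (q i) x + r2 i - r1 i)%:E)
   + (\sum_(i < n) (r1 i * (Sl i)%:R - r2 i * (Su i)%:R))%:E)%E.

Definition dual_values {R : realType} {V : finType} (n : nat)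
  (w : V -> V -> R) (C : 'I_n -> V -> R) (Sl Su : 'I_n -> nat)
  (gamma : \bar R) : set (\bar R) :=
  [set v | exists q r1 r2, in_Sinf q /\
     (forall i, in_box gamma (r1 i) /\ in_box gamma (r2 i)) /\
     v = dual_obj w C Sl Su q r1 r2].

Definition maxflow_values {R : realType} {V : finType} (n : nat) (E : rel V)
  (w : V -> V -> R) (C : 'I_n -> V -> R) (Sl Su : 'I_n -> nat)
  (gamma : \bar R) : set (\bar R) :=
  [set v | exists (ps : V -> R) (p : 'I_n -> V -> R)
      (q : 'I_n -> V -> V -> R) (r1 r2 : 'I_n -> R),
     (forall i x y, E x y -> `|q i x y| <= 1) /\
     (forall i x, p i x <= C i x) /\
     (forall i x, divw w (q i) x - ps x + p i x = r1 i - r2 i) /\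
     (forall i, in_box gamma (r1 i) /\ in_box gamma (r2 i)) /\
     v = (\sum_(x : V) ps x
          + \sum_(i < n) (r1 i * (Sl i)%:R - r2 i * (Su i)%:R))%:E].

(* Main.v *)
Require Import Defs.
From HB Require Import structures.
From mathcomp Require Import all_boot all_order all_algebra.
From mathcomp Require Import all_classical all_reals.
From mathcomp Require Import ereal.
From mathcomp Require Import ring lra.
Import Order.TTheory GRing.Theory Num.Theory.
Local Open Scope ring_scope.

Lemma bigmin_fin (R : realType) (n : nat) (i0 : 'I_n) (f : 'I_n -> R) :
  exists r : R, (\big[Order.min/+oo%E]_(i < n) (f i)%:E)%E = r%:E /\
     forall i, r <= f i.
Proof.
have H : exists r : R, (\big[Order.min/+oo%E]_(i < n) (f i)%:E)%E = r%:E
            \/ (\big[Order.min/+oo%E]_(i < n) (f i)%:E)%E = +oo%E.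
  apply: (big_ind (fun y : \bar R => exists r : R, y = r%:E \/ y = +oo%E)).
  - by exists 0; right.
  - move=> a b [ra [->|->]] [rb [->|->]].
    + exists (Order.min ra rb); left; rewrite /Order.min /=.
      by rewrite lte_fin; case: ifP.
    + by exists ra; left; rewrite minEle leey.
    + by exists rb; left; rewrite minEge leey.
    + by exists 0; right; rewrite minEle lexx.
  - by move=> i _; exists (f i); left.
case: H => r [Hr|Hr].
- exists r; split => // i.
  by rewrite -lee_fin -Hr; apply: bigmin_le.
- have := @bigmin_le _ _ _ (+oo%E) i0 (fun i => (f i)%:E).
  by rewrite Hr leye_eq.
Qed.

Theorem proposition2 (R : realType) (V : finType) (E : rel V)
  (w : V -> V -> R) (n : nat) (C : 'I_n -> V -> R) (Sl Su : 'I_n -> nat)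
  (gamma : \bar R) :
  weighted_graph E w ->
  (2 <= n)%N ->
  (forall i, (Sl i <= Su i)%N) ->
  (\sum_(i < n) Sl i <= #|V| <= \sum_(i < n) Su i)%N ->
  (0 <= gamma)%E ->
  ereal_sup (dual_values w C Sl Su gamma)
  = ereal_sup (maxflow_values E w C Sl Su gamma).
Proof.
move=> [Esym [wsym [wpos w0]]] n2 _ _ _.
have lt0n : (0 < n)%N by apply: leq_trans n2.
pose i0 : 'I_n := Ordinal lt0n.
apply/eqP; rewrite eq_le; apply/andP; split.
- apply: ge_ereal_sup => v [q [r1 [r2 [Hq [Hr ->]]]]].
  pose f x i := C i x + divw w (q i) x + r2 i - r1 i.
  have Hm x := @bigmin_fin R n i0 (f x).
  pose ps x := proj1_sig (cid (Hm x)).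
  have Hps x : (\big[Order.min/+oo%E]_(i < n) (f x i)%:E)%E = (ps x)%:E /\
     forall i, ps x <= f x i by rewrite /ps; case: (cid (Hm x)).
  apply: ereal_sup_ubound.
  exists ps, (fun i x => ps x - divw w (q i) x + r1 i - r2 i), q, r1, r2.
  split; first by move=> i x y _; apply: Hq.
  split.
    move=> i x; have := (proj2 (Hps x)) i; rewrite /f.
    move: (ps x) (divw w (q i) x) (r1 i) (r2 i) (C i x) => a b c d e; lra.
  split; first by move=> i x; move: (ps x) (divw w (q i) x) (r1 i) (r2 i) => a b c d; ring.
  split => //.
  rewrite /dual_obj.
  under eq_bigr => x _ do rewrite (proj1 (Hps x)).
  by rewrite sumEFin.
- apply: ge_ereal_sup => v [ps [p [q [r1 [r2 [Hq [Hp [Hd [Hr ->]]]]]]]]].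
  pose q' i x y := if E x y then q i x y else 0.
  have Hdiv i x : divw w (q' i) x = divw w (q i) x.
    rewrite /divw; apply: f_equal; apply: eq_bigr => y _.
    rewrite /q' (Esym y x); case HE: (E x y); first by [].
    have -> : w x y = 0 by apply: w0; rewrite HE.
    by rewrite !mul0r.
  apply: (@le_trans _ _ (dual_obj w C Sl Su q' r1 r2)); last first.
    apply: ereal_sup_ubound; exists q', r1, r2; split => //.
    move=> i x y; rewrite /q'; case: ifP => HE; first exact: Hq.
    by rewrite normr0.
  rewrite /dual_obj EFinD -sumEFin leeD2r // lee_sum // => x _.
  apply: le_bigmin; first exact: leey.
  move=> i _; rewrite lee_fin Hdiv.
  have := Hp i x; have := Hd i x.
  move: (ps x) (divw w (q i) x) (r1 i) (r2 i) (C i x) (p i x) => a b c d e g; lra.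
Qed.
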